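(* Let $\mathbb{U}$ be a monster model of CODF, $K\preceq\mathbb{U}$ a small model, and $a\in\mathbb{U}$ such that $\dim(\bar\delta^{n-1}(a)/K)=n$. Then there is $b\in\mathbb{U}$ such that $tp(\bar\delta^{n-1}(b)/K)=tp(\bar\delta^{n-1}(a)/K)$ and $\delta^k(b)=0$ for all $k\geq n$.
   Context: CODF is the theory of closed ordered differential fields (model completion of the theory of ordered fields with a derivation $\delta$, no compatibility with the order assumed); its models are real closed. $\bar\delta^{n-1}(a)=(a,\delta(a),\dots,\delta^{n-1}(a))\in\mathbb{U}^n$. $tp(\cdot/K)$ denotes the type in the ordered ring language $\{<,+,\cdot,0,1\}$, and $\dim(c/K)$ is the o-minimal (topological) dimension of $tp(c/K)$ in the real closed field $\mathbb{U}$, i.e. the minimal dimension of a semialgebraic set over $K$ containing $c$. *)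

(* Defs.v *)
From HB Require Import structures.
From mathcomp Require Import all_boot all_order all_algebra.
From mathcomp Require Import mpoly.
From Stdlib Require List.
Set Implicit Arguments. Unset Strict Implicit. Unset Printing Implicit Defensive.
Import Order.TTheory GRing.Theory Num.Theory.
Local Open Scope ring_scope.

Inductive term (R : Type) : Type :=
| TVar of nat
| TPar of R
| TZero
| TOne
| TAdd of term R & term R
| TNeg of term R
| TMul of term R & term R
| TDer of term R.

Inductive form (R : Type) : Type :=
| FTrue
| FEq of term R & term R
| FLt of term R & term R
| FNot of form R
| FAnd of form R & form R
| FEx of nat & form R.

Arguments TZero {R}. Arguments TOne {R}. Arguments FTrue {R}.

Definition upd (R : Type) (e : nat -> R) (i : nat) (x : R) : nat -> R :=
  fun j => if j == i then x else e j.

Fixpoint teval (R : nzRingType) (d : R -> R) (e : nat -> R) (t : term R) : R :=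
  match t with
  | TVar i => e i
  | TPar c => c
  | TZero => 0
  | TOne => 1
  | TAdd t1 t2 => teval d e t1 + teval d e t2
  | TNeg t1 => - teval d e t1
  | TMul t1 t2 => teval d e t1 * teval d e t2
  | TDer t1 => d (teval d e t1)
  end.

(* Satisfaction in the structure whose domain is the subset [P] of R
   (quantifiers range over P); P = fun _ => True gives satisfaction in R. *)
Fixpoint fholds (R : numDomainType) (d : R -> R) (P : R -> Prop)
    (e : nat -> R) (f : form R) : Prop :=
  match f with
  | FTrue => True
  | FEq t1 t2 => teval d e t1 = teval d e t2
  | FLt t1 t2 => teval d e t1 < teval d e t2
  | FNot g => ~ fholds d P e g
  | FAnd g h => fholds d P e g /\ fholds d P e h
  | FEx i g => exists x, P x /\ fholds d P (upd e i x) g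
  end.

Definition allU (R : Type) : R -> Prop := fun _ => True.

Fixpoint t_params (R : Type) (A : R -> Prop) (t : term R) : Prop :=
  match t with
  | TVar _ | TZero | TOne => True
  | TPar c => A c
  | TAdd t1 t2 | TMul t1 t2 => t_params A t1 /\ t_params A t2
  | TNeg t1 | TDer t1 => t_params A t1
  end.

Fixpoint f_params (R : Type) (A : R -> Prop) (f : form R) : Prop :=
  match f with
  | FTrue => True
  | FEq t1 t2 | FLt t1 t2 => t_params A t1 /\ t_params A t2
  | FNot g | FEx _ g => f_params A g
  | FAnd g h => f_params A g /\ f_params A h
  end.

Fixpoint t_ring (R : Type) (t : term R) : Prop :=
  match t with
  | TVar _ | TPar _ | TZero | TOne => True
  | TAdd t1 t2 | TMul t1 t2 => t_ring t1 /\ t_ring t2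
  | TNeg t1 => t_ring t1
  | TDer _ => False
  end.

Fixpoint f_ring (R : Type) (f : form R) : Prop :=
  match f with
  | FTrue => True
  | FEq t1 t2 | FLt t1 t2 => t_ring t1 /\ t_ring t2
  | FNot g | FEx _ g => f_ring g
  | FAnd g h => f_ring g /\ f_ring h
  end.

Fixpoint f_qf (R : Type) (f : form R) : Prop :=
  match f with
  | FTrue | FEq _ _ | FLt _ _ => True
  | FNot g => f_qf g
  | FAnd g h => f_qf g /\ f_qf h
  | FEx _ _ => False
  end.

Definition is_derivation (R : nzRingType) (d : R -> R) : Prop :=
  (forall x y, d (x + y) = d x + d y) /\
  (forall x y, d (x * y) = x * d y + d x * y).

Definition jet (R : Type) (d : R -> R) (n : nat) (a : R) : 'I_n -> R :=
  fun i => iter i d a.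
Arguments jet {R} d n a _.

(* Axiom scheme of CODF (Singer; in the form of Brouette--Point) for a
   real closed field R with a derivation d: for every differential
   polynomial f(X) = f*(X, dX, ..., d^m X) of order m and every point c
   in R^(m+1) with f*(c) = 0 and separant (df*/dX_m)(c) <> 0, every open
   neighbourhood of c (basic open boxes suffice) contains d-jet d^m(b)
   of some zero b of f. *)
Definition CODF_axioms (R : rcfType) (d : R -> R) : Prop :=
  is_derivation d /\
  forall (m : nat) (f : {mpoly R[m.+1]}) (c : 'I_m.+1 -> R),
    meval c f = 0 -> meval c (mderiv ord_max f) != 0 ->
    forall lo hi : 'I_m.+1 -> R, (forall i, lo i < c i < hi i) ->
    exists b : R, meval (jet d m.+1 b) f = 0 /\
                  (forall i, lo i < jet d m.+1 b i < hi i).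

Definition elem_sub (R : numDomainType) (d : R -> R) (K : R -> Prop) : Prop :=
  [/\ K 0, K 1,
      (forall x y, K x -> K y -> [/\ K (x + y), K (- x) & K (x * y)]),
      (forall x, K x -> K (d x)) &
      forall (f : form R) (e : nat -> R), f_params K f -> (forall i, K (e i)) ->
        (fholds d K e f <-> fholds d (@allU R) e f)].

(* |K|^+-saturation of (R, d): every set of formulas in one variable
   (variable assignment constant equal to x), with parameters from a set A
   of cardinality at most |K|, which is finitely satisfiable in R, is
   realized in R. *)
Definition saturated_over (R : numDomainType) (d : R -> R) (K : R -> Prop) : Prop :=
  forall (A : R -> Prop),
    (exists g : {x | A x} -> {x | K x}, injective g) ->
    forall Sigma : form R -> Prop,
      (forall f, Sigma f -> f_params A f) ->
      (forall l : list (form R), (forall f, List.In f l -> Sigma f) ->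
         exists x, forall f, List.In f l -> fholds d (@allU R) (fun _ => x) f) ->
      exists x, forall f, Sigma f -> fholds d (@allU R) (fun _ => x) f.

Definition ext (R : nzRingType) (n : nat) (c : 'I_n -> R) : nat -> R :=
  fun i => match insub i with Some j => c j | None => 0 end.

Definition tp_eq (R : numDomainType) (d : R -> R) (K : R -> Prop) (n : nat)
    (c c' : 'I_n -> R) : Prop :=
  forall f : form R, f_ring f -> f_params K f ->
    (fholds d (@allU R) (ext c) f <-> fholds d (@allU R) (ext c') f).

Definition semialg_over (R : numDomainType) (d : R -> R) (K : R -> Prop)
    (n : nat) (S : ('I_n -> R) -> Prop) : Prop :=
  exists f : form R, [/\ f_ring f, f_qf f, f_params K f &
    forall x, S x <-> fholds d (@allU R) (ext x) f].

Definition nonempty_interior (R : numDomainType) (k : nat)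
    (T : ('I_k -> R) -> Prop) : Prop :=
  exists lo hi : 'I_k -> R, (forall i, lo i < hi i) /\
    forall x : 'I_k -> R, (forall i, lo i < x i < hi i) -> T x.

Definition has_dim (R : numDomainType) (n : nat) (S : ('I_n -> R) -> Prop)
    (k : nat) : Prop :=
  (exists s : 'I_k -> 'I_n, injective s /\
     nonempty_interior (fun y : 'I_k -> R => exists x, S x /\ forall i, y i = x (s i))) /\
  (forall (k' : nat) (s : 'I_k' -> 'I_n), injective s ->
     nonempty_interior (fun y : 'I_k' -> R => exists x, S x /\ forall i, y i = x (s i)) ->
     (k' <= k)%N).

Definition dim_over (R : numDomainType) (d : R -> R) (K : R -> Prop) (n : nat)
    (c : 'I_n -> R) (k : nat) : Prop :=
  (exists S, [/\ semialg_over d K S, S c & has_dim S k]) /\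
  (forall S k', semialg_over d K S -> S c -> has_dim S k' -> (k <= k')%N).

(* Main.v *)
Require Import Defs.
From HB Require Import structures.
From mathcomp Require Import all_boot all_order all_algebra.
From mathcomp Require Import mpoly.
From Stdlib Require Import Classical FunctionalExtensionality.
From Stdlib Require List.
Require Import Defs.
Set Implicit Arguments. Unset Strict Implicit. Unset Printing Implicit Defensive.
Import Order.TTheory GRing.Theory Num.Theory.
Local Open Scope ring_scope.

Fixpoint tmv (R : Type) (t : term R) : nat :=
  match t with
  | TVar i => i.+1
  | TAdd a b | TMul a b => maxn (tmv a) (tmv b)
  | TNeg a | TDer a => tmv a
  | _ => 0%N
  end.

Fixpoint fmv (R : Type) (f : form R) : nat :=
  match f with
  | FTrue => 0%N
  | FEq a b | FLt a b => maxn (tmv a) (tmv b)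
  | FNot g => fmv g
  | FAnd g h => maxn (fmv g) (fmv h)
  | FEx i g => maxn i.+1 (fmv g)
  end.

Lemma teval_agree (R : nzRingType) (d : R -> R) e e' (t : term R) :
  (forall i, (i < tmv t)%N -> e i = e' i) -> teval d e t = teval d e' t.
Proof.
elim: t => //= [i|a IHa b IHb|a IHa|a IHa b IHb|a IHa] H.
- by apply: H.
- by rewrite IHa ?IHb // => i Hi; apply: H; rewrite leq_max Hi ?orbT.
- by rewrite IHa.
- by rewrite IHa ?IHb // => i Hi; apply: H; rewrite leq_max Hi ?orbT.
- by rewrite IHa.
Qed.

Lemma fholds_agree (R : numDomainType) (d : R -> R) P (f : form R) B e e' :
  (fmv f <= B)%N -> (forall i, (i < B)%N -> e i = e' i) ->
  (fholds d P e f <-> fholds d P e' f).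
Proof.
elim: f e e' => //= [a b|a b|g IH|g IHg h IHh|i g IH] e e' HB H.
- rewrite geq_max in HB; case/andP: HB => H1 H2.
  rewrite (@teval_agree _ d e e' a) ?(@teval_agree _ d e e' b) //.
  + by move=> j Hj; apply: H; apply: leq_trans H2.
  + by move=> j Hj; apply: H; apply: leq_trans H1.
- rewrite geq_max in HB; case/andP: HB => H1 H2.
  rewrite (@teval_agree _ d e e' a) ?(@teval_agree _ d e e' b) //.
  + by move=> j Hj; apply: H; apply: leq_trans H2.
  + by move=> j Hj; apply: H; apply: leq_trans H1.
- by rewrite (IH e e').
- rewrite geq_max in HB; case/andP: HB => H1 H2.
  by rewrite (IHg e e') // (IHh e e').
- rewrite geq_max in HB; case/andP: HB => H1 H2.
  split=> [[x [Px Hx]]|[x [Px Hx]]]; exists x; split=> //.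
  + apply/(IH (upd e i x)) => // j Hj; rewrite /upd; case: eqP => // _; exact: H.
  + apply/(IH _ (upd e' i x)) => // j Hj; rewrite /upd; case: eqP => // _; exact: H.
Qed.

Lemma fholds_ext (R : numDomainType) (d : R -> R) P (f : form R) e e' :
  (forall i, e i = e' i) -> (fholds d P e f <-> fholds d P e' f).
Proof. by move=> H; rewrite (functional_extensionality _ _ H). Qed.

Lemma fholds_eq (R : numDomainType) (d : R -> R) P (f : form R) e e' :
  fholds d P e f -> (forall i, e i = e' i) -> fholds d P e' f.
Proof. by move=> Hf H; rewrite -(functional_extensionality _ _ H). Qed.

Fixpoint tocc (R : Type) (i : nat) (t : term R) : bool :=
  match t with
  | TVar j => j == i
  | TAdd a b | TMul a b => tocc i a || tocc i b
  | TNeg a | TDer a => tocc i a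
  | _ => false
  end.

Lemma teval_upd_nocc (R : nzRingType) (d : R -> R) e i x (t : term R) :
  ~~ tocc i t -> teval d (upd e i x) t = teval d e t.
Proof.
elim: t => //= [j|a IHa b IHb|a IHa|a IHa b IHb|a IHa].
- by rewrite /upd => /negbTE ->.
- by rewrite negb_or => /andP[/IHa -> /IHb ->].
- by move/IHa ->.
- by rewrite negb_or => /andP[/IHa -> /IHb ->].
- by move/IHa ->.
Qed.

Fixpoint tsub (R : Type) (s : nat -> term R) (t : term R) : term R :=
  match t with
  | TVar i => s i
  | TPar c => TPar c
  | TZero => TZero
  | TOne => TOne
  | TAdd a b => TAdd (tsub s a) (tsub s b)
  | TNeg a => TNeg (tsub s a)
  | TMul a b => TMul (tsub s a) (tsub s b)
  | TDer a => TDer (tsub s a)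
  end.

Definition sbind (R : Type) (s : nat -> term R) (i : nat) : nat -> term R :=
  fun j => if j == i then TVar _ i else s j.

Fixpoint fsub (R : Type) (s : nat -> term R) (f : form R) : form R :=
  match f with
  | FTrue => FTrue
  | FEq a b => FEq (tsub s a) (tsub s b)
  | FLt a b => FLt (tsub s a) (tsub s b)
  | FNot g => FNot (fsub s g)
  | FAnd g h => FAnd (fsub s g) (fsub s h)
  | FEx i g => FEx i (fsub (sbind s i) g)
  end.

Lemma tsub_eval (R : nzRingType) (d : R -> R) e s (t : term R) :
  teval d e (tsub s t) = teval d (fun j => teval d e (s j)) t.
Proof. by elim: t => //= [a -> b ->|a ->|a -> b ->|a ->]. Qed.

Lemma fsub_holds (R : numDomainType) (d : R -> R) P (f : form R) B s e :
  (fmv f <= B)%N ->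
  (forall i j, (i < B)%N -> j != i -> ~~ tocc i (s j)) ->
  (fholds d P e (fsub s f) <-> fholds d P (fun j => teval d e (s j)) f).
Proof.
elim: f s e => //= [a b|a b|g IH|g IHg h IHh|i g IH] s e HB Hs.
- by rewrite !tsub_eval.
- by rewrite !tsub_eval.
- by rewrite IH.
- rewrite geq_max in HB; case/andP: HB => H1 H2.
  by rewrite IHg // IHh.
- rewrite geq_max in HB; case/andP: HB => H1 H2.
  have Hs' : forall i' j, (i' < B)%N -> j != i' -> ~~ tocc i' (sbind s i j).
    move=> i' j Hi' Hj; rewrite /sbind; case: (j =P i) => [Eji|_]; last exact: Hs.
    by subst j.
  split=> [[x [Px Hx]]|[x [Px Hx]]]; exists x; split=> //.
  + move: Hx; rewrite IH // => Hx; apply: (fholds_eq Hx) => j.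
    rewrite /sbind /upd; case: (j =P i) => [Eji|/eqP Hj] /=; first by subst j; rewrite eqxx.
    by rewrite teval_upd_nocc // Hs.
  + rewrite IH //; apply: (fholds_eq Hx) => j.
    rewrite /sbind /upd; case: (j =P i) => [Eji|/eqP Hj] /=; first by subst j; rewrite eqxx.
    by rewrite teval_upd_nocc // Hs.
Qed.

Definition exs (R : Type) (vs : seq nat) (g : form R) : form R :=
  foldr (fun i acc => FEx i acc) g vs.
Definition ovr (R : Type) (e w : nat -> R) (vs : seq nat) : nat -> R :=
  fun j => if j \in vs then w j else e j.

Lemma exsP (R : numDomainType) (d : R -> R) P e vs (g : form R) :
  fholds d P e (exs vs g) <->
  exists w, (forall j, j \in vs -> P (w j)) /\ fholds d P (ovr e w vs) g.
Proof.
elim: vs e => [|v vs IH] e /=.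
  split=> [H|[w [_ H]]]; first by exists e; split.
  by apply: (fholds_eq H) => j.
split=> [[x [Px]]|[w [Pw H]]].
  rewrite IH => -[w [Pw H]].
  exists (fun j => if j \in vs then w j else x); split.
    move=> j; rewrite inE; case Hj: (j \in vs); first by move=> _; exact: Pw.
    by move=> _.
  apply: (fholds_eq H) => j; rewrite /ovr /upd inE.
  by case: (j \in vs); rewrite ?orbT ?orbF //; case: (j == v).
exists (w v); split; first by apply: Pw; rewrite inE eqxx.
rewrite IH; exists w; split; first by move=> j Hj; apply: Pw; rewrite inE Hj orbT.
apply: (fholds_eq H) => j; rewrite /ovr /upd inE.
case: (j \in vs); rewrite ?orbT ?orbF //.
by case: eqP => // ->.
Qed.

Definition fall (R : Type) (vs : seq nat) (g : form R) : form R :=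
  FNot (exs vs (FNot g)).

Lemma fallP (R : numDomainType) (d : R -> R) P e vs (g : form R) :
  fholds d P e (fall vs g) <->
  forall w, (forall j, j \in vs -> P (w j)) -> fholds d P (ovr e w vs) g.
Proof.
rewrite /fall /= exsP; split=> H.
  move=> w Pw; apply: NNPP => Hn; apply: H; exists w; split => //.
by case=> w [Pw /= Hn]; apply: Hn; apply: H.
Qed.

Definition fiff (R : Type) (a b : form R) : form R :=
  FAnd (FNot (FAnd a (FNot b))) (FNot (FAnd b (FNot a))).

Lemma fiffP (R : numDomainType) (d : R -> R) P e (a b : form R) :
  fholds d P e (fiff a b) <-> (fholds d P e a <-> fholds d P e b).
Proof.
rewrite /fiff /=; split.
  case=> H1 H2; split=> H; apply: NNPP => Hn; [apply: H1 | apply: H2]; by split.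
by move=> [H1 H2]; split=> -[Ha Hb]; [apply: Hb; apply: H1 | apply: Hb; apply: H2].
Qed.

Definition bigAnd (R : Type) (l : list (form R)) : form R := foldr (@FAnd R) FTrue l.

Lemma bigAndP (R : numDomainType) (d : R -> R) P e (l : list (form R)) :
  fholds d P e (bigAnd l) <-> (forall f, List.In f l -> fholds d P e f).
Proof.
elim: l => [|f l IH] /=; first by split.
rewrite IH; split=> [[Hf Hl] g [<-|Hg]|H]; [by [] | exact: Hl |].
by split; [apply: H; left | move=> g Hg; apply: H; right].
Qed.

Lemma bigAnd_ring (R : Type) (l : list (form R)) :
  (forall f, List.In f l -> f_ring f) -> f_ring (bigAnd l).
Proof.
elim: l => [|f l IH] //= H; split; [apply: H; left | apply: IH => g Hg; apply: H; right] => //.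
Qed.

Lemma bigAnd_params (R : Type) A (l : list (form R)) :
  (forall f, List.In f l -> f_params A f) -> f_params A (bigAnd l).
Proof.
elim: l => [|f l IH] //= H; split; [apply: H; left | apply: IH => g Hg; apply: H; right] => //.
Qed.

Lemma bigAnd_fmv (R : Type) B (l : list (form R)) :
  (forall f, List.In f l -> (fmv f <= B)%N) -> (fmv (bigAnd l) <= B)%N.
Proof.
elim: l => [|f l IH] //= H; rewrite geq_max H ?IH //; first by move=> g Hg; apply: H; right.
by left.
Qed.

Lemma t_params_mono (R : Type) (A B : R -> Prop) (t : term R) :
  (forall c, A c -> B c) -> t_params A t -> t_params B t.
Proof. by move=> H; elim: t => //=; intuition. Qed.

Lemma f_params_mono (R : Type) (A B : R -> Prop) (f : form R) :
  (forall c, A c -> B c) -> f_params A f -> f_params B f.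
Proof.
move=> H; elim: f => //=; intuition; exact: (t_params_mono H).
Qed.

Fixpoint tps (R : Type) (t : term R) : seq R :=
  match t with
  | TPar c => [:: c]
  | TAdd a b | TMul a b => tps a ++ tps b
  | TNeg a | TDer a => tps a
  | _ => [::]
  end.

Fixpoint fps (R : Type) (f : form R) : seq R :=
  match f with
  | FTrue => [::]
  | FEq a b | FLt a b => tps a ++ tps b
  | FNot g | FEx _ g => fps g
  | FAnd g h => fps g ++ fps h
  end.

Lemma tps_params (R : eqType) (t : term R) : t_params (fun c => c \in tps t) t.
Proof.
elim: t => //= [c|a IHa b IHb|a IHa b IHb]; first by rewrite inE.
- by split; apply: t_params_mono (IHa) || apply: t_params_mono (IHb); move=> c; rewrite mem_cat => ->; rewrite ?orbT.
- by split; apply: t_params_mono (IHa) || apply: t_params_mono (IHb); move=> c; rewrite mem_cat => ->; rewrite ?orbT.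
Qed.

Lemma fps_params (R : eqType) (f : form R) : f_params (fun c => c \in fps f) f.
Proof.
elim: f => //= [a b|a b|g IHg h IHh].
- by split; [apply: t_params_mono (tps_params a) | apply: t_params_mono (tps_params b)];
    move=> c; rewrite mem_cat => ->; rewrite ?orbT.
- by split; [apply: t_params_mono (tps_params a) | apply: t_params_mono (tps_params b)];
    move=> c; rewrite mem_cat => ->; rewrite ?orbT.
- by split; [apply: f_params_mono IHg | apply: f_params_mono IHh];
    move=> c; rewrite mem_cat => ->; rewrite ?orbT.
Qed.

Fixpoint tmp (R : Type) (h : R -> term R) (t : term R) : term R :=
  match t with
  | TPar c => h c
  | TVar i => TVar _ i
  | TZero => TZero
  | TOne => TOne
  | TAdd a b => TAdd (tmp h a) (tmp h b)
  | TNeg a => TNeg (tmp h a)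
  | TMul a b => TMul (tmp h a) (tmp h b)
  | TDer a => TDer (tmp h a)
  end.

Fixpoint fmp (R : Type) (h : R -> term R) (f : form R) : form R :=
  match f with
  | FTrue => FTrue
  | FEq a b => FEq (tmp h a) (tmp h b)
  | FLt a b => FLt (tmp h a) (tmp h b)
  | FNot g => FNot (fmp h g)
  | FAnd g h' => FAnd (fmp h g) (fmp h h')
  | FEx i g => FEx i (fmp h g)
  end.

Lemma tmp_id (R : Type) (t : term R) : tmp (@TPar R) t = t.
Proof. by elim: t => //= [a -> b ->|a ->|a -> b ->|a ->]. Qed.
Lemma fmp_id (R : Type) (f : form R) : fmp (@TPar R) f = f.
Proof. by elim: f => //= [a b|a b|g ->|g -> h ->|i g ->]; rewrite ?tmp_id. Qed.

Lemma tmp_eval (R : nzRingType) (d : R -> R) e e' h h' (t : term R) :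
  t_params (fun c => teval d e (h c) = teval d e' (h' c)) t ->
  (forall i, (i < tmv t)%N -> e i = e' i) ->
  teval d e (tmp h t) = teval d e' (tmp h' t).
Proof.
elim: t => //= [i|a IHa b IHb|a IHa|a IHa b IHb|a IHa] Hp H.
- by apply: H.
- by case: Hp => Ha Hb; rewrite IHa ?IHb // => i Hi; apply: H; rewrite leq_max Hi ?orbT.
- by rewrite IHa.
- by case: Hp => Ha Hb; rewrite IHa ?IHb // => i Hi; apply: H; rewrite leq_max Hi ?orbT.
- by rewrite IHa.
Qed.

Lemma fmp_holds (R : numDomainType) (d : R -> R) P e e' h h' (f : form R) :
  f_qf f ->
  f_params (fun c => teval d e (h c) = teval d e' (h' c)) f ->
  (forall i, (i < fmv f)%N -> e i = e' i) ->
  (fholds d P e (fmp h f) <-> fholds d P e' (fmp h' f)).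
Proof.
elim: f => //= [a b|a b|g IH|g IHg k IHk] Hq Hp H.
- case: Hp => Ha Hb; rewrite (tmp_eval Ha) ?(tmp_eval Hb) //.
  + by move=> i Hi; apply: H; rewrite leq_max Hi orbT.
  + by move=> i Hi; apply: H; rewrite leq_max Hi.
- case: Hp => Ha Hb; rewrite (tmp_eval Ha) ?(tmp_eval Hb) //.
  + by move=> i Hi; apply: H; rewrite leq_max Hi orbT.
  + by move=> i Hi; apply: H; rewrite leq_max Hi.
- by rewrite IH.
- case: Hq => Hq1 Hq2; case: Hp => Hp1 Hp2.
  rewrite IHg ?IHk //.
  + by move=> i Hi; apply: H; rewrite leq_max Hi orbT.
  + by move=> i Hi; apply: H; rewrite leq_max Hi.
Qed.

Lemma tmp_params (R : Type) (A B : R -> Prop) h (t : term R) :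
  (forall c, A c -> t_params B (h c)) -> t_params A t -> t_params B (tmp h t).
Proof. by move=> H; elim: t => //=; intuition. Qed.

Lemma fmp_params (R : Type) (A B : R -> Prop) h (f : form R) :
  (forall c, A c -> t_params B (h c)) -> f_params A f -> f_params B (fmp h f).
Proof.
move=> H; elim: f => //=; intuition; exact: tmp_params H _.
Qed.

Lemma tmp_ring (R : Type) h (t : term R) :
  (forall c, t_ring (h c)) -> t_ring t -> t_ring (tmp h t).
Proof. by move=> H; elim: t => //=; intuition. Qed.

Lemma fmp_ring (R : Type) h (f : form R) :
  (forall c, t_ring (h c)) -> f_ring f -> f_ring (fmp h f).
Proof. by move=> H; elim: f => //=; intuition; apply: tmp_ring. Qed.

Lemma fmp_qf (R : Type) h (f : form R) : f_qf f -> f_qf (fmp h f).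
Proof. by elim: f => //=; intuition. Qed.

From mathcomp.real_closed Require ordered_qelim qe_rcf.
Import ordered_qelim.

Fixpoint tr_t (R : Type) (t : term R) : GRing.term R :=
  match t with
  | TVar i => GRing.Var R i
  | TPar c => GRing.Const c
  | TZero => GRing.NatConst R 0
  | TOne => GRing.NatConst R 1
  | TAdd a b => GRing.Add (tr_t a) (tr_t b)
  | TNeg a => GRing.Opp (tr_t a)
  | TMul a b => GRing.Mul (tr_t a) (tr_t b)
  | TDer _ => GRing.NatConst R 0
  end.

Fixpoint tr_f (R : Type) (f : form R) : ord.formula R :=
  match f with
  | FTrue => ord.Bool true
  | FEq a b => ord.Equal (tr_t a) (tr_t b)
  | FLt a b => ord.Lt (tr_t a) (tr_t b)
  | FNot g => ord.Not (tr_f g)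
  | FAnd g h => ord.And (tr_f g) (tr_f h)
  | FEx i g => ord.Exists i (tr_f g)
  end.

Lemma tr_t_eval (R : rcfType) (d : R -> R) (s : seq R) e (t : term R) :
  t_ring t -> (forall i, nth 0 s i = e i) -> GRing.eval s (tr_t t) = teval d e t.
Proof.
move=> Hr Hs; elim: t Hr => //= [a IHa b IHb [Ha Hb]|a IHa Ha|a IHa b IHb [Ha Hb]].
- by rewrite IHa ?IHb.
- by rewrite IHa.
- by rewrite IHa ?IHb.
Qed.

Lemma tr_t_rterm (R : rcfType) (t : term R) : GRing.rterm (tr_t t).
Proof. by elim: t => //= a -> b ->. Qed.

Lemma tr_f_rformula (R : rcfType) (f : form R) : ord.rformula (tr_f f).
Proof. by elim: f => //= [a b|a b|g -> h ->]; rewrite ?tr_t_rterm. Qed.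

Lemma tr_f_holds (R : rcfType) (d : R -> R) (f : form R) s e :
  f_ring f -> (forall i, nth 0 s i = e i) ->
  (ord.holds s (tr_f f) <-> fholds d (@allU R) e f).
Proof.
elim: f s e => //= [a b|a b|g IH|g IHg h IHh|i g IH] s e Hr Hs.
- by case: Hr => Ha Hb; rewrite (tr_t_eval d Ha Hs) (tr_t_eval d Hb Hs).
- by case: Hr => Ha Hb; rewrite (tr_t_eval d Ha Hs) (tr_t_eval d Hb Hs).
- by rewrite (IH s e Hr Hs).
- by case: Hr => H1 H2; rewrite (IHg s e H1 Hs) (IHh s e H2 Hs).
- have Hs' x : forall j, nth 0 (set_nth 0 s i x) j = upd e i x j.
    by move=> j; rewrite nth_set_nth /= /upd; case: (j == i).
  split=> [[x Hx]|[x [_ Hx]]]; exists x.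
  + by split=> //; rewrite -(IH _ _ Hr (Hs' x)).
  + by rewrite (IH _ _ Hr (Hs' x)).
Qed.

Definition natT (R : Type) (n : nat) : term R := iter n (TAdd TOne) TZero.

Fixpoint bk_t (R : Type) (t : GRing.term R) : term R :=
  match t with
  | GRing.Var i => TVar R i
  | GRing.Const c => TPar c
  | GRing.NatConst n => natT R n
  | GRing.Add a b => TAdd (bk_t a) (bk_t b)
  | GRing.Opp a => TNeg (bk_t a)
  | GRing.NatMul a n => iter n (TAdd (bk_t a)) TZero
  | GRing.Mul a b => TMul (bk_t a) (bk_t b)
  | GRing.Inv _ => TZero
  | GRing.Exp a n => iter n (TMul (bk_t a)) TOne
  end.

Fixpoint bk_f (R : Type) (f : ord.formula R) : form R :=
  match f with
  | ord.Bool b => if b then FTrue else FNot FTrue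
  | ord.Equal a b => FEq (bk_t a) (bk_t b)
  | ord.Lt a b => FLt (bk_t a) (bk_t b)
  | ord.Le a b => FNot (FLt (bk_t b) (bk_t a))
  | ord.Unit _ => FTrue
  | ord.And g h => FAnd (bk_f g) (bk_f h)
  | ord.Or g h => FNot (FAnd (FNot (bk_f g)) (FNot (bk_f h)))
  | ord.Implies g h => FNot (FAnd (bk_f g) (FNot (bk_f h)))
  | ord.Not g => FNot (bk_f g)
  | ord.Exists _ _ => FTrue
  | ord.Forall _ _ => FTrue
  end.

Lemma bk_t_eval (R : rcfType) (d : R -> R) (s : seq R) e (t : GRing.term R) :
  GRing.rterm t -> (forall i, nth 0 s i = e i) -> teval d e (bk_t t) = GRing.eval s t.
Proof.
move=> Hr Hs; elim: t Hr => /=.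
- by move=> i _; rewrite Hs.
- by [].
- by move=> n _; elim: n => //= n ->; rewrite -[in RHS]addn1 natrD addrC.
- by move=> a IHa b IHb /andP[Ha Hb]; rewrite IHa ?IHb.
- by move=> a IHa Ha; rewrite IHa.
- by move=> a IHa n Ha; elim: n => //= n ->; rewrite IHa // mulrS.
- by move=> a IHa b IHb /andP[Ha Hb]; rewrite IHa ?IHb.
- by [].
- by move=> a IHa n Ha; elim: n => //= n ->; rewrite IHa // exprS.
Qed.

Lemma bk_t_ring (R : Type) (t : GRing.term R) : t_ring (bk_t t).
Proof.
elim: t => //= [n|a IHa n|a IHa n].
- by elim: n.
- by elim: n.
- by elim: n.
Qed.

Lemma bk_f_ring (R : Type) (f : ord.formula R) : f_ring (bk_f f).
Proof.
elim: f => //=; first by case.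
all: by intros; repeat split; try apply: bk_t_ring; try assumption.
Qed.

Lemma bk_f_qf (R : Type) (f : ord.formula R) : f_qf (bk_f f).
Proof.
elim: f => //=; first by case.
all: by intros; repeat split; try assumption.
Qed.

Lemma bk_f_holds (R : rcfType) (d : R -> R) P (f : ord.formula R) s e :
  ord.qf_form f -> ord.rformula f -> (forall i, nth 0 s i = e i) ->
  (fholds d P e (bk_f f) <-> ord.holds s f).
Proof.
move=> Hq Hr Hs; elim: f Hq Hr => //=.
- case=> _ _ /=; first by split.
  by split=> // H; exfalso; apply: H.
- by move=> a b _ /andP[Ha Hb]; rewrite (bk_t_eval d Ha Hs) (bk_t_eval d Hb Hs).
- by move=> a b _ /andP[Ha Hb]; rewrite (bk_t_eval d Ha Hs) (bk_t_eval d Hb Hs).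
- by move=> a b _ /andP[Ha Hb]; rewrite (bk_t_eval d Ha Hs) (bk_t_eval d Hb Hs) leNgt; split => [/negP|/negP].
- move=> g IHg h IHh /andP[Hq1 Hq2] /andP[Hr1 Hr2].
  by rewrite IHg // IHh.
- move=> g IHg h IHh /andP[Hq1 Hq2] /andP[Hr1 Hr2].
  rewrite IHg // IHh //; split; [move=> H; apply: NNPP => Hn; apply: H; tauto | tauto].
- move=> g IHg h IHh /andP[Hq1 Hq2] /andP[Hr1 Hr2].
  rewrite IHg // IHh //; split; [move=> H Hg; apply: NNPP => Hn; apply: H; tauto | tauto].
- by move=> g IHg Hq Hr; rewrite IHg.
Qed.

Definition wp (R : rcfType) : nat -> seq (GRing.term R) * seq (GRing.term R) -> ord.formula R :=
  fun n bc => @qe_rcf.qfr_to_formula R (@qe_rcf.wproj R n bc).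

Lemma QE0 (R : rcfType) (d : R -> R) (f : form R) :
  f_ring f -> exists g, [/\ f_ring g, f_qf g &
    forall e, fholds d (@allU R) e f <-> fholds d (@allU R) e g].
Proof.
move=> Hr.
pose q := ord.quantifier_elim (@wp R) (tr_f f).
have /andP[Hq1 Hq2] : ord.qf_form q && ord.rformula q.
  exact: (ord.quantifier_elim_wf (@qe_rcf.wf_QE_wproj R) (tr_f_rformula f)).
exists (bk_f q); split; [exact: bk_f_ring | exact: bk_f_qf |] => e.
pose B := maxn (fmv f) (fmv (bk_f q)).
pose eB := fun j => if (j < B)%N then e j else 0.
pose s := mkseq eB B.
have Hs : forall i, nth 0 s i = eB i.
  move=> i; case: (ltnP i B) => Hi; first by rewrite nth_mkseq.
  by rewrite nth_default ?size_mkseq // /eB ltnNge Hi.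
have Hag : forall i, (i < B)%N -> e i = eB i by move=> i Hi; rewrite /eB Hi.
rewrite (@fholds_agree R d (@allU R) f B e eB (leq_maxl _ _) Hag).
rewrite (@fholds_agree R d (@allU R) (bk_f q) B e eB (leq_maxr _ _) Hag).
rewrite -(tr_f_holds _ Hr Hs) (bk_f_holds _ _ Hq1 Hq2 Hs).
split=> H.
  apply/(ord.qf_evalP _ Hq1).
  exact/(ord.quantifier_elim_rformP (@qe_rcf.wf_QE_wproj R) (@qe_rcf.valid_QE_wproj R) s (tr_f_rformula f)).
apply/(ord.quantifier_elim_rformP (@qe_rcf.wf_QE_wproj R) (@qe_rcf.valid_QE_wproj R) s (tr_f_rformula f)).
exact/(ord.qf_evalP _ Hq1).
Qed.

Lemma exs_params (R : Type) A vs (g : form R) : f_params A g -> f_params A (exs vs g).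
Proof. by elim: vs. Qed.
Lemma fall_params (R : Type) A vs (g : form R) : f_params A g -> f_params A (fall vs g).
Proof. by move=> H; rewrite /fall /=; apply: exs_params. Qed.
Lemma exs_ring (R : Type) vs (g : form R) : f_ring g -> f_ring (exs vs g).
Proof. by elim: vs. Qed.

Lemma QE (R : rcfType) (d : R -> R) (K : R -> Prop) (f : form R) :
  elem_sub d K -> f_ring f -> f_params K f ->
  exists g, [/\ f_ring g, f_qf g, f_params K g &
    forall e, fholds d (@allU R) e f <-> fholds d (@allU R) e g].
Proof.
move=> HK Hr Hp; rewrite /elem_sub in HK; case: HK => K0 K1 Kops Kd Kel.
have [g0 [Hr0 Hq0 He0]] := QE0 d Hr.
pose cs := fps g0; pose N := maxn (fmv f) (fmv g0); pose m := size cs.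
pose h1 := fun c => TVar R (N + index c cs).
pose g1 := fmp h1 g0.
pose Th := fall (iota 0 N) (fiff g1 f).
pose Th' := exs (iota N m) Th.
have Hidx : forall c, c \in cs -> (N + index c cs) \in iota N m.
  by move=> c Hc; rewrite mem_iota leq_addr ltn_add2l index_mem.
have Hg1 : f_params K g1.
  by apply: (fmp_params (A := fun c => c \in cs)) => //; apply: fps_params.
have HpTh : f_params K Th by apply: fall_params; rewrite /fiff /=.
have Hcl : fholds d (@allU R) (fun _ => 0) Th'.
  apply/exsP; exists (fun j => nth 0 cs (j - N)); split => //.
  apply/fallP => w' _; apply/fiffP.
  set E := ovr _ _ _.
  rewrite He0 -[in X in _ <-> X](fmp_id g0).
  apply: fmp_holds => //.
  apply: f_params_mono (fps_params g0) => c Hc /=.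
  rewrite /E /ovr mem_iota /= ltnNge leq_addr /= Hidx //.
  by rewrite addKn nth_index.
have HK' : fholds d K (fun _ => 0) Th'.
  by apply/Kel => //; apply: exs_params.
move/exsP: HK' => [w [Kw Hw]].
set E0 := ovr _ w _ in Hw.
have KE0 : forall j, K (E0 j) by move=> j; rewrite /E0 /ovr; case: ifP => // /Kw.
move/(Kel _ _ HpTh KE0)/fallP: Hw => Hw.
exists (fmp (fun c => TPar (w (N + index c cs))) g0); split.
- by apply: fmp_ring.
- exact: fmp_qf.
- apply: (fmp_params (A := fun c => c \in cs)); last exact: fps_params.
  by move=> c Hc /=; apply: Kw; apply: Hidx.
move=> e; have /fiffP := Hw e (fun _ _ => I).
set E1 := ovr E0 e _ => Hiff.
have HE1 : forall i, (i < N)%N -> e i = E1 i.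
  by move=> i Hi; rewrite /E1 /ovr mem_iota /= Hi.
rewrite (@fholds_agree R d (@allU R) f N e E1 (leq_maxl _ _) HE1) -Hiff.
apply: fmp_holds => //.
- apply: f_params_mono (fps_params g0) => c Hc /=.
  rewrite /E1 /ovr mem_iota /= ltnNge leq_addr /= /E0 /ovr Hidx //.
- move=> i Hi; rewrite HE1 //; apply: leq_trans Hi (leq_maxr _ _).
Qed.

Lemma ex_max (Q : nat -> Prop) n : Q 0%N -> (forall k, Q k -> (k <= n)%N) ->
  exists k, Q k /\ forall k', Q k' -> (k' <= k)%N.
Proof.
move=> Q0 Qb.
have H : forall m, (exists k, Q k /\ forall k', Q k' -> (k' <= k)%N) \/
                   (exists k, Q k /\ (m <= k)%N).
  elim=> [|m [IH|[k [Qk Hk]]]]; [by right; exists 0%N | by left |].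
  case: (classic (exists k', Q k' /\ (m.+1 <= k')%N)) => [H|H]; first by right.
  left; exists k; split => // k' Qk'; apply: leq_trans Hk.
  by rewrite leqNgt; apply/negP => Hlt; apply: H; exists k'.
case: (H n.+1) => // -[k [Qk Hk]].
by have := Qb _ Qk; rewrite leqNgt Hk.
Qed.

Definition projS (R : Type) n k (S : ('I_n -> R) -> Prop) (s : 'I_k -> 'I_n) :=
  fun y : 'I_k -> R => exists x, S x /\ forall i, y i = x (s i).

Lemma dim_lt (R : numDomainType) n (S : ('I_n -> R) -> Prop) c :
  S c -> ~ nonempty_interior S -> exists k, (k < n)%N /\ has_dim S k.
Proof.
move=> Sc NI.
pose Q k := exists s : 'I_k -> 'I_n, injective s /\ nonempty_interior (projS S s).
have Q0 : Q 0%N.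
  exists (widen_ord (leq0n n)); split; first by case.
  exists (fun _ => 0), (fun _ => 1); split; first by case.
  by move=> y _; exists c; split => //; case.
have Qb : forall k, Q k -> (k <= n)%N.
  move=> k [s [Hs _]]; have := leq_card s Hs; by rewrite !card_ord.
have [k [Qk Hk]] := ex_max Q0 Qb.
exists k; split; last first.
  split; [exact: Qk | move=> k' s Hs Hne; apply: Hk; exists s; split => //].
rewrite ltn_neqAle Qb // andbT; apply/eqP => Ekn; subst k.
case: Qk => s [Hs [lo [hi [Hlh Hbox]]]].
have [sinv sK sK'] := injF_bij Hs.
apply: NI; exists (fun j => lo (sinv j)), (fun j => hi (sinv j)); split => // x Hx.
have Hy : forall i, lo i < x (s i) < hi i by move=> i; have := Hx (s i); rewrite sK.
have [x' [Sx' Hxx']] := Hbox (fun i => x (s i)) Hy.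
suff -> : x = x' by [].
apply: functional_extensionality => j.
by rewrite -(sK' j) Hxx'.
Qed.

Lemma ext_ord (R : nzRingType) n (c : 'I_n -> R) (i : 'I_n) : ext c i = c i.
Proof.
rewrite /ext; case: insubP => [j _ Hj|]; last by rewrite ltn_ord.
by congr c; apply: val_inj.
Qed.

Lemma ext_lt (R : nzRingType) n (c : 'I_n -> R) j (Hj : (j < n)%N) :
  ext c j = c (Ordinal Hj).
Proof. by rewrite -ext_ord. Qed.

Lemma ext_ge (R : nzRingType) n (c : 'I_n -> R) j : (n <= j)%N -> ext c j = 0.
Proof. by rewrite /ext; case: insubP => // k Hk _; rewrite leqNgt Hk. Qed.

Lemma ovr_in (R : Type) (e w : nat -> R) vs j : j \in vs -> ovr e w vs j = w j.
Proof. by rewrite /ovr => ->. Qed.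
Lemma ovr_out (R : Type) (e w : nat -> R) vs j : j \notin vs -> ovr e w vs j = e j.
Proof. by rewrite /ovr => /negbTE ->. Qed.

Lemma bigAnd_map (R : numDomainType) (d : R -> R) P e (g : nat -> form R) l :
  fholds d P e (bigAnd (map g l)) <-> (forall i, i \in l -> fholds d P e (g i)).
Proof.
elim: l => [|i l IH] /=; first by split.
rewrite IH; split=> [[H1 H2] j|H]; first by rewrite inE => /orP[/eqP ->|/H2].
by split; [apply: H; rewrite inE eqxx | move=> j Hj; apply: H; rewrite inE Hj orbT].
Qed.

Lemma tsub_ring (R : Type) s (t : term R) :
  (forall j, t_ring (s j)) -> t_ring t -> t_ring (tsub s t).
Proof. by move=> H; elim: t => //=; intuition. Qed.

Lemma fsub_ring (R : Type) s (f : form R) :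
  (forall j, t_ring (s j)) -> f_ring f -> f_ring (fsub s f).
Proof.
elim: f s => /=.
- by [].
- by move=> a b s Hs [H1 H2]; split; apply: tsub_ring.
- by move=> a b s Hs [H1 H2]; split; apply: tsub_ring.
- by move=> g IH s Hs Hg; apply: IH.
- by move=> g IHg h IHh s Hs [H1 H2]; split; [apply: IHg | apply: IHh].
- move=> i g IH s Hs Hg; apply: IH => // j; rewrite /sbind; case: ifP => //.
Qed.

Lemma tsub_params (R : Type) A s (t : term R) :
  (forall j, t_params A (s j)) -> t_params A t -> t_params A (tsub s t).
Proof. by move=> H; elim: t => //=; intuition. Qed.

Lemma fsub_params (R : Type) A s (f : form R) :
  (forall j, t_params A (s j)) -> f_params A f -> f_params A (fsub s f).
Proof.
elim: f s => /=.
- by [].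
- by move=> a b s Hs [H1 H2]; split; apply: tsub_params.
- by move=> a b s Hs [H1 H2]; split; apply: tsub_params.
- by move=> g IH s Hs Hg; apply: IH.
- by move=> g IHg h IHh s Hs [H1 H2]; split; [apply: IHg | apply: IHh].
- move=> i g IH s Hs Hg; apply: IH => // j; rewrite /sbind; case: ifP => //.
Qed.

Definition bsig (R : Type) M n : nat -> term R :=
  fun j => if (j < n)%N then TVar R (M + n + n + j)%N else TZero.

Definition boxF' (R : Type) M n (Phi : form R) : form R :=
  exs (iota M (n + n))
   (FAnd (bigAnd [seq FAnd (FLt (TVar R (M + i)%N) (TVar R i)) (FLt (TVar R i) (TVar R (M + n + i)%N)) | i <- iota 0 n])
     (FNot (exs (iota (M + n + n) n)
       (FAnd (bigAnd [seq FAnd (FLt (TVar R (M + i)%N) (TVar R (M + n + n + i)%N))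
                               (FLt (TVar R (M + n + n + i)%N) (TVar R (M + n + i)%N)) | i <- iota 0 n])
             (FNot (fsub (bsig R M n) Phi)))))).

Definition boxF (R : Type) n (Phi : form R) := boxF' (maxn n (fmv Phi)) n Phi.

Lemma boxF_ring (R : Type) n (Phi : form R) : f_ring Phi -> f_ring (boxF n Phi).
Proof.
move=> H; apply: exs_ring; split.
  by apply: bigAnd_ring => f /List.in_map_iff [i [<- _]].
apply: exs_ring; split.
  by apply: bigAnd_ring => f /List.in_map_iff [i [<- _]].
by apply: fsub_ring => // j; rewrite /bsig; case: ifP.
Qed.

Lemma boxF_params (R : Type) A n (Phi : form R) : f_params A Phi -> f_params A (boxF n Phi).
Proof.
move=> H; apply: exs_params; split.
  by apply: bigAnd_params => f /List.in_map_iff [i [<- _]].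
apply: exs_params; split.
  by apply: bigAnd_params => f /List.in_map_iff [i [<- _]].
by apply: fsub_params => // j; rewrite /bsig; case: ifP.
Qed.

Lemma fh_and (R : numDomainType) (d : R -> R) P e (a b : form R) :
  fholds d P e (FAnd a b) = (fholds d P e a /\ fholds d P e b).
Proof. by []. Qed.
Lemma fh_lt (R : numDomainType) (d : R -> R) P e (a b : term R) :
  fholds d P e (FLt a b) = (teval d e a < teval d e b).
Proof. by []. Qed.
Lemma te_var (R : nzRingType) (d : R -> R) e i : teval d e (TVar R i) = e i.
Proof. by []. Qed.
Lemma te_zero (R : nzRingType) (d : R -> R) e : teval d e (TZero) = 0.
Proof. by []. Qed.
Lemma bsig_lt (R : Type) M n j : (j < n)%N -> bsig R M n j = TVar R (M + n + n + j)%N.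
Proof. by rewrite /bsig => ->. Qed.
Lemma bsig_ge (R : Type) M n j : (n <= j)%N -> bsig R M n j = TZero.
Proof. by rewrite /bsig ltnNge => ->. Qed.

Lemma boxP' (R : numDomainType) (d : R -> R) M n (Phi : form R) (x : 'I_n -> R) :
  (n <= M)%N -> (fmv Phi <= M)%N ->
  fholds d (@allU R) (ext x) (boxF' M n Phi) <->
  exists lo hi : 'I_n -> R, (forall i, lo i < x i < hi i) /\
    forall y : 'I_n -> R, (forall i, lo i < y i < hi i) -> fholds d (@allU R) (ext y) Phi.
Proof.
move=> HnM HfM.
have E_x : forall w (i : 'I_n), ovr (ext x) w (iota M (n + n)) i = x i.
  move=> w i; rewrite ovr_out ?ext_ord // mem_iota negb_and -ltnNge.
  by rewrite (leq_trans (ltn_ord i) HnM).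
have E_lo : forall w (i : 'I_n), ovr (ext x) w (iota M (n + n)) (M + i)%N = w (M + i)%N.
  by move=> w i; rewrite ovr_in // mem_iota leq_addr ltn_add2l (leq_trans (ltn_ord i)) ?leq_addr.
have E_hi : forall w (i : 'I_n), ovr (ext x) w (iota M (n + n)) (M + n + i)%N = w (M + n + i)%N.
  by move=> w i; rewrite ovr_in // mem_iota -addnA leq_addr ltn_add2l ltn_add2l ltn_ord.
have E2 : forall w w2 j, (j < M + n + n)%N ->
   ovr (ovr (ext x) w (iota M (n + n))) w2 (iota (M + n + n) n) j = ovr (ext x) w (iota M (n + n)) j.
  by move=> w w2 j Hj; rewrite ovr_out // mem_iota negb_and -ltnNge Hj.
have E2y : forall w w2 (i : 'I_n),
   ovr (ovr (ext x) w (iota M (n + n))) w2 (iota (M + n + n) n) (M + n + n + i)%N = w2 (M + n + n + i)%N.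
  by move=> w w2 i; rewrite ovr_in // mem_iota leq_addr ltn_add2l ltn_ord.
have E2lo : forall w w2 (i : 'I_n),
   ovr (ovr (ext x) w (iota M (n + n))) w2 (iota (M + n + n) n) (M + i)%N = w (M + i)%N.
  move=> w w2 i; rewrite E2 ?E_lo //.
  by rewrite -!addnA ltn_add2l (leq_trans (ltn_ord i)) // leq_addr.
have E2hi : forall w w2 (i : 'I_n),
   ovr (ovr (ext x) w (iota M (n + n))) w2 (iota (M + n + n) n) (M + n + i)%N = w (M + n + i)%N.
  by move=> w w2 i; rewrite E2 ?E_hi // ltn_add2l ltn_ord.
have Hsub : forall e, fholds d (@allU R) e (fsub (bsig R M n) Phi) <->
   fholds d (@allU R) (fun j => teval d e (bsig R M n j)) Phi.
  move=> e; apply: (fsub_holds _ _ _ HfM) => i j Hi Hj; rewrite /bsig; case: ifP => // _ /=.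
  apply/negP => /eqP Hji; move: Hi; rewrite -Hji ltnNge.
  by rewrite -!addnA leq_addr.
rewrite /boxF' exsP; split.
- case=> w [_ [Hout Hin]].
  exists (fun i => w (M + i)%N), (fun i => w (M + n + i)%N); split.
    move=> i; have Hi : (i : nat) \in iota 0 n by rewrite mem_iota /= ltn_ord.
    move/bigAnd_map: Hout => /(_ i Hi); rewrite fh_and !fh_lt !te_var => -[H1 H2].
    by move: H1 H2; rewrite E_x E_lo E_hi => -> ->.
  move=> y Hy; apply: NNPP => Hn; apply: Hin; apply/exsP.
  exists (fun j => ext y (j - (M + n + n))%N); split => //.
  have Ey := E2y w (fun j => ext y (j - (M + n + n))%N).
  have Elo := E2lo w (fun j => ext y (j - (M + n + n))%N).
  have Ehi := E2hi w (fun j => ext y (j - (M + n + n))%N).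
  set E := ovr _ _ _ in Ey Elo Ehi *.
  split.
    apply/bigAnd_map => i; rewrite mem_iota add0n => /andP[_ Hi].
    have := Hy (Ordinal Hi) => /andP[H1 H2].
    rewrite fh_and !fh_lt !te_var.
    have := Ey (Ordinal Hi); have := Elo (Ordinal Hi); have := Ehi (Ordinal Hi).
    rewrite /= => -> -> ->.
    by rewrite addKn (ext_lt _ Hi) H1 H2.
  move=> /Hsub HP; apply: Hn; apply: (fholds_eq HP) => j.
  case: (ltnP j n) => Hj; last by rewrite bsig_ge // te_zero ext_ge.
  by rewrite bsig_lt // te_var (Ey (Ordinal Hj)) addKn.
- case=> lo [hi [Hx Hy]].
  exists (fun j => if (j < M + n)%N then ext lo (j - M) else ext hi (j - (M + n))); split => //.
  have Ex := E_x (fun j => if (j < M + n)%N then ext lo (j - M) else ext hi (j - (M + n))).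
  have Elo := E_lo (fun j => if (j < M + n)%N then ext lo (j - M) else ext hi (j - (M + n))).
  have Ehi := E_hi (fun j => if (j < M + n)%N then ext lo (j - M) else ext hi (j - (M + n))).
  have Elo2 := E2lo (fun j => if (j < M + n)%N then ext lo (j - M) else ext hi (j - (M + n))).
  have Ehi2 := E2hi (fun j => if (j < M + n)%N then ext lo (j - M) else ext hi (j - (M + n))).
  have Ey2 := E2y (fun j => if (j < M + n)%N then ext lo (j - M) else ext hi (j - (M + n))).
  set E := ovr _ _ _ in Ex Elo Ehi Elo2 Ehi2 Ey2 *.
  have Hlo : forall i : 'I_n, E (M + i)%N = lo i.
    by move=> i; rewrite Elo ltn_add2l ltn_ord addKn ext_ord.
  have Hhi : forall i : 'I_n, E (M + n + i)%N = hi i.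
    by move=> i; rewrite Ehi ltnNge leq_addr /= addKn ext_ord.
  split.
    apply/bigAnd_map => i; rewrite mem_iota add0n => /andP[_ Hi].
    rewrite fh_and !fh_lt !te_var.
    have := Ex (Ordinal Hi); have := Hlo (Ordinal Hi); have := Hhi (Ordinal Hi).
    rewrite /= => -> -> ->; exact/andP/Hx.
  move=> /exsP [w2 [_ []]].
  have := Elo2 w2; have := Ehi2 w2; have := Ey2 w2.
  set E' := ovr E w2 _ => Ey' Ehi' Elo' /bigAnd_map Hin HnP.
  apply: HnP; apply/Hsub.
  have HP : fholds d (@allU R) (ext (fun i : 'I_n => w2 (M + n + n + i)%N)) Phi.
    apply: Hy => i.
    have Hi : (i : nat) \in iota 0 n by rewrite mem_iota /= ltn_ord.
    have := Hin i Hi; rewrite fh_and !fh_lt !te_var => -[H1 H2].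
    move: H1 H2; rewrite Ey' Ehi' Elo' ltn_add2l ltn_ord ltnNge leq_addr /=.
    by rewrite !addKn !ext_ord => -> ->.
  apply: (fholds_eq HP) => j.
  case: (ltnP j n) => Hj; last by rewrite bsig_ge // te_zero ext_ge.
  by rewrite bsig_lt // te_var (Ey' (Ordinal Hj)) (ext_lt _ Hj).
Qed.

Lemma boxP (R : numDomainType) (d : R -> R) n (Phi : form R) (x : 'I_n -> R) :
  fholds d (@allU R) (ext x) (boxF n Phi) <->
  exists lo hi : 'I_n -> R, (forall i, lo i < x i < hi i) /\
    forall y : 'I_n -> R, (forall i, lo i < y i < hi i) -> fholds d (@allU R) (ext y) Phi.
Proof. by apply: boxP'; [apply: leq_maxl | apply: leq_maxr]. Qed.

Lemma mderivXi (R : nzRingType) n (i : 'I_n) : ('X_i : {mpoly R[n]})^`M(i) = 1.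
Proof.
rewrite mderivX mnm1E eqxx.
have -> : (U_(i) - U_(i))%MM = 0%MM by apply/mnmP => j; rewrite mnmBE subnn mnm0E.
by rewrite mpolyX0 scale1r.
Qed.

Lemma keybox (U : rcfType) (d : U -> U) (K : U -> Prop) n (c : 'I_n -> U) (Phi : form U) :
  elem_sub d K -> dim_over d K c n -> f_ring Phi -> f_params K Phi ->
  fholds d (@allU U) (ext c) Phi ->
  exists lo hi : 'I_n -> U, (forall i, lo i < c i < hi i) /\
    forall y : 'I_n -> U, (forall i, lo i < y i < hi i) -> fholds d (@allU U) (ext y) Phi.
Proof.
move=> HK [_ Hmin] Hr Hp Hc; apply: NNPP => Hnb.
pose T := FAnd Phi (FNot (boxF n Phi)).
have HTr : f_ring T by split => //; apply: boxF_ring.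
have HTp : f_params K T by split => //; apply: boxF_params.
have [g [Hgr Hgq Hgp Hge]] := QE HK HTr HTp.
pose S := fun x : 'I_n -> U => fholds d (@allU U) (ext x) g.
have semi : semialg_over d K S by exists g; split.
have Sc : S c.
  rewrite /S -Hge; split => //; move/boxP => H; exact: Hnb H.
have NI : ~ nonempty_interior S.
  case=> lo [hi [Hlh Hin]].
  pose mid := fun i => (lo i + hi i) / 2.
  have Hm : forall i, lo i < mid i < hi i.
    by move=> i; have [h1 h2] := midf_lt (Hlh i); rewrite h1 h2.
  have := Hin mid Hm; rewrite /S -Hge => -[_ Hn]; apply: Hn; apply/boxP.
  exists lo, hi; split => // y Hy; have := Hin y Hy; rewrite /S -Hge; by case.
have [k [Hk Hd]] := dim_lt Sc NI.
by have := Hmin S k semi Sc Hd; rewrite leqNgt Hk.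
Qed.

Lemma teval_iterD (R : nzRingType) (d : R -> R) e j (t : term R) :
  teval d e (iter j (@TDer R) t) = iter j d (teval d e t).
Proof. by elim: j => //= j ->. Qed.

Lemma tocc_iterD (R : Type) i j (t : term R) : tocc i (iter j (@TDer R) t) = tocc i t.
Proof. by elim: j. Qed.

Lemma tparams_iterD (R : Type) A j (t : term R) :
  t_params A t -> t_params A (iter j (@TDer R) t).
Proof. by elim: j. Qed.

Definition Sub (R : Type) n (f : form R) : form R :=
  fsub (fun j => if (j < n)%N then iter j (@TDer R) (TVar R (fmv f)) else TZero) f.

Lemma SubP (R : rcfType) (d : R -> R) n (f : form R) x :
  fholds d (@allU R) (fun _ => x) (Sub n f) <-> fholds d (@allU R) (ext (jet d n x)) f.
Proof.
rewrite /Sub (fsub_holds _ _ _ (leqnn (fmv f))).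
  split => H; apply: (fholds_eq H) => j; case: (ltnP j n) => Hj.
  - by rewrite teval_iterD (ext_lt _ Hj).
  - by rewrite ext_ge.
  - by rewrite teval_iterD (ext_lt _ Hj).
  - by rewrite ext_ge.
move=> i j Hi _; case: ifP => // _; rewrite tocc_iterD /=.
by apply/eqP => Hv; move: Hi; rewrite -Hv ltnn.
Qed.

Lemma Sub_params (R : Type) A n (f : form R) : f_params A f -> f_params A (Sub n f).
Proof.
move=> H; apply: fsub_params => // j; case: ifP => // _.
exact: tparams_iterD.
Qed.

Theorem lemma2p5 (U : rcfType) (d : U -> U) (K : U -> Prop) (n : nat) (a : U) :
  CODF_axioms d -> saturated_over d K -> elem_sub d K ->
  dim_over d K (jet d n a) n ->
  exists b : U, tp_eq d K (jet d n b) (jet d n a) /\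
                (forall k : nat, (n <= k)%N -> iter k d b = 0).
Proof.
move=> [Hder Hcodf] Hsat HK Hdim.
have d0 : d 0 = 0.
  have H := Hder.1 0 0; rewrite addr0 in H.
  have : d 0 - d 0 = d 0 + d 0 - d 0 by rewrite -H.
  by rewrite subrr addrK.
pose a' := jet d n a.
have L : forall Phi, f_ring Phi -> f_params K Phi -> fholds d (@allU U) (ext a') Phi ->
    exists b, fholds d (@allU U) (ext (jet d n b)) Phi /\ iter n d b = 0.
  move=> Phi Hr Hp Hc.
  have [lo [hi [Hlh Hbox]]] := keybox HK Hdim Hr Hp Hc.
  pose c0 := fun i : 'I_n.+1 => ext a' i.
  pose lo' := fun i : 'I_n.+1 => if (i < n)%N then ext lo i else -1.
  pose hi' := fun i : 'I_n.+1 => if (i < n)%N then ext hi i else 1.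
  have Hc0 : meval c0 ('X_(@ord_max n) : {mpoly U[n.+1]}) = 0.
    by rewrite mevalXU /c0 ext_ge.
  have Hsep : meval c0 (('X_(@ord_max n) : {mpoly U[n.+1]})^`M(ord_max)) != 0.
    by rewrite mderivXi meval1 oner_neq0.
  have Hlh' : forall i, lo' i < c0 i < hi' i.
    move=> i; rewrite /lo' /hi' /c0; case: (ltnP i n) => Hi.
      by rewrite !(ext_lt _ Hi); apply: Hlh.
    by rewrite ext_ge // ltrN10 ltr01.
  have [b [Hb Hbb]] := Hcodf n _ c0 Hc0 Hsep lo' hi' Hlh'.
  exists b; split; last by move: Hb; rewrite mevalXU.
  apply: Hbox => i; have := Hbb (widen_ord (leqnSn n) i).
  by rewrite /lo' /hi' /= ltn_ord !ext_ord.
pose Dn := FEq (iter n (@TDer U) (TVar U 0)) TZero.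
pose Sig := fun f : form U =>
  (exists Phi, [/\ f_ring Phi, f_params K Phi, fholds d (@allU U) (ext a') Phi & f = Sub n Phi])
  \/ f = Dn.
have HSp : forall f, Sig f -> f_params K f.
  move=> f [[Phi [_ Hp _ ->]]|->]; first exact: Sub_params.
  by split => //; apply: tparams_iterD.
have HSf : forall l : list (form U), (forall f, List.In f l -> Sig f) ->
    exists x, forall f, List.In f l -> fholds d (@allU U) (fun _ => x) f.
  move=> l Hl.
  suff [Phi [Hr Hp Hc HPhi]] : exists Phi, [/\ f_ring Phi, f_params K Phi,
      fholds d (@allU U) (ext a') Phi &
      forall x, iter n d x = 0 -> fholds d (@allU U) (ext (jet d n x)) Phi ->
        forall f, List.In f l -> fholds d (@allU U) (fun _ => x) f].
    have [b [Hb1 Hb2]] := L Phi Hr Hp Hc.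
    by exists b; apply: HPhi.
  elim: l Hl => [|f l IH] Hl.
    by exists FTrue; split.
  have [Phi [Hr Hp Hc HPhi]] := IH (fun g Hg => Hl g (or_intror Hg)).
  case: (Hl f (or_introl erefl)) => [[Phi' [Hr' Hp' Hc' ->]]|->].
    exists (FAnd Phi' Phi); split => //.
    move=> x Hx [H1 H2] g [<-|Hg]; first by apply/SubP.
    exact: HPhi.
  exists Phi; split => // x Hx HP g [<-|Hg]; last exact: HPhi.
  by rewrite /= teval_iterD /= Hx.
have Hinj : exists g : {x | K x} -> {x | K x}, injective g by exists id.
have [b Hb] := Hsat K Hinj Sig HSp HSf.
have Hbn : iter n d b = 0.
  by have := Hb Dn (or_intror erefl); rewrite /= teval_iterD.
exists b; split.
  move=> f Hr Hp; split => H.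
    apply: NNPP => Hn.
    have := Hb (Sub n (FNot f)) (or_introl (ex_intro _ (FNot f) (And4 Hr Hp Hn erefl))).
    by move/SubP => /= ; apply.
  by apply/SubP; apply: Hb; left; exists f; split.
move=> k Hk; rewrite -(subnK Hk) iterD Hbn.
by elim: (k - n)%N => //= m ->.
Qed.
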